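(* Let $\alpha_1,\alpha_2,\alpha_3,\alpha_4$ be positive integers. The graph $C(\alpha_1,\alpha_2,\alpha_3,\alpha_4)$ has exactly four distinct Laplacian eigenvalues if and only if, writing $\alpha=\alpha_1$, it is one of $C(\alpha,1,1,1)$, $C(\alpha,1,1+\alpha,1)$, $C(\alpha,1,1,2+\alpha)$, $C(\alpha,1,1+\alpha,1+\alpha)$, $C(\alpha,1,1+\alpha,2+2\alpha)$. Consequently, these are exactly the $\mathcal{C}$-graphs (with an even number $k$ of parts) having exactly four distinct Laplacian eigenvalues.
   Context: $C(\alpha_1,\dots,\alpha_k)$ is defined recursively by $C(\alpha_1)=\overline{K_{\alpha_1}}$ (edgeless graph) and $C(\alpha_1,\dots,\alpha_i)=\overline{C(\alpha_1,\dots,\alpha_{i-1})\cup K_{\alpha_i}}$ for $i=2,\dots,k$ (disjoint union, then complement); with $k$ even it is called a $\mathcal{C}$-graph. Equivalently for $k$ even, with $\pi_i$ the $\alpha_i$ vertices introduced at step $i$: $\pi_i$ is a clique for $i$ odd, independent for $i$ even, and for $i<j$ vertices of $\pi_i,\pi_j$ are adjacent iff $j$ is even. Laplacian eigenvalues are those of $L=D-A$. *)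

(* Defs.v *)
From HB Require Import structures.
From mathcomp Require Import all_boot all_order all_algebra all_field.
Set Implicit Arguments. Unset Strict Implicit. Unset Printing Implicit Defensive.
Import Order.TTheory GRing.Theory Num.Theory.
Local Open Scope ring_scope.

(* A C-graph C(s) for s = [:: a_1; ...; a_k] (k even, all a_i > 0) has
   vertex set 'I_(sumn s).  Vertex v (a natural number < sumn s) belongs to
   the block pi_(b+1), where b = cblk s v is the 0-based block index: the
   least b with v < a_1 + ... + a_(b+1). *)
Definition cblk (s : seq nat) (v : nat) : nat :=
  find (fun i => (v < sumn (take i.+1 s))%N) (iota 0 (size s)).

(* Adjacency (k even), following the paper's equivalent description with
   1-based block index i = b+1: pi_i is a clique for i odd (b even) and
   independent for i even (b odd); for i < j, pi_i and pi_j are completely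
   joined iff j is even (i.e. the larger 0-based index is odd). *)
Definition cadj (s : seq nat) (u v : nat) : bool :=
  (u != v) &&
  (if cblk s u == cblk s v then ~~ odd (cblk s u)
   else odd (maxn (cblk s u) (cblk s v))).

Definition cgraph_lap (s : seq nat) : 'M[algC]_(sumn s) :=
  \matrix_(i, j)
    (if i == j then (#|[set x : 'I_(sumn s) | cadj s i x]|)%:R
     else - (cadj s i j)%:R).

Definition num_distinct_eigenvalues_eq (n : nat) (A : 'M[algC]_n) (m : nat) :=
  exists es : seq algC, [/\ uniq es, size es = m &
    forall a : algC, eigenvalue A a <-> a \in es].

Definition four_eig_family (a1 a2 a3 a4 : nat) : Prop :=
  (a2 = 1%N /\ a3 = 1%N /\ a4 = 1%N) \/
  (a2 = 1%N /\ a3 = (1 + a1)%N /\ a4 = 1%N) \/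
  (a2 = 1%N /\ a3 = 1%N /\ a4 = (2 + a1)%N) \/
  (a2 = 1%N /\ a3 = (1 + a1)%N /\ a4 = (1 + a1)%N) \/
  (a2 = 1%N /\ a3 = (1 + a1)%N /\ a4 = (2 + 2 * a1)%N).

(* Main.v *)
Require Import Defs.
From mathcomp Require Import all_boot all_order all_algebra all_field.
From mathcomp Require Import zify ring lra.
Set Implicit Arguments. Unset Strict Implicit. Unset Printing Implicit Defensive.
Import Order.TTheory GRing.Theory Num.Theory.

Section Aux.

Definition Pf (s : seq nat) (m : nat) := sumn (take m s).

Lemma Pf_S s m : (m < size s)%N -> Pf s m.+1 = (Pf s m + nth 0 s m)%N.
Proof.
elim: s m => [|x s IH] [|m] //=; rewrite /Pf /=.
  by rewrite take0 /= addn0 add0n.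
move=> Hm; have := IH m Hm; rewrite /Pf => ->; lia.
Qed.

Lemma Pf_mono s m n : (m <= n)%N -> (Pf s m <= Pf s n)%N.
Proof.
rewrite /Pf; elim: s m n => [|x s IH] [|m] [|n] //= H.
have := IH m n H; lia.
Qed.

Lemma Pf_size s : Pf s (size s) = sumn s.
Proof. by rewrite /Pf take_size. Qed.

Lemma Pf_sum s m : Pf s m = (\sum_(c < size s | (c < m)%N) nth 0 s c)%N.
Proof.
elim: s m => [|x s IH] [|m] /=; rewrite /Pf /= ?big_ord0 ?take0 //.
  by rewrite big1.
rewrite big_mkcond big_ord_recl /=. have := IH m; rewrite /Pf => ->.
by rewrite big_mkcond.
Qed.

Lemma cblk_spec s v : (v < sumn s)%N ->
  [/\ (cblk s v < size s)%N, (Pf s (cblk s v) <= v)%N & (v < Pf s (cblk s v).+1)%N].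
Proof.
move=> Hv.
have Hs : (0 < size s)%N by case: s Hv.
have Hh : has (fun i => (v < sumn (take i.+1 s))%N) (iota 0 (size s)).
  apply/hasP; exists (size s).-1; first by rewrite mem_iota; lia.
  by rewrite prednK // take_size.
have Hlt : (cblk s v < size s)%N by rewrite /cblk -{2}(size_iota 0 (size s)) -has_find.
split => //.
- rewrite /cblk; case E: (find _ _) => [|b]; first by rewrite /Pf take0.
  have Hb : (b < find (fun i => (v < sumn (take i.+1 s))%N) (iota 0 (size s)))%N by rewrite E.
  have := before_find 0 Hb; rewrite nth_iota; last by rewrite /cblk in Hlt; lia.
  by rewrite add0n /Pf => /negbT; rewrite -leqNgt.
- have := nth_find 0 Hh; rewrite nth_iota //.
Qed.

Lemma cblk_eq s v c : (c < size s)%N -> (Pf s c <= v)%N -> (v < Pf s c.+1)%N ->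
  cblk s v = c.
Proof.
move=> Hc H1 H2.
have Hv : (v < sumn s)%N.
  apply: (leq_trans H2); rewrite -Pf_size; apply: Pf_mono; lia.
have [Hb1 Hb2 Hb3] := cblk_spec Hv.
case: (ltngtP (cblk s v) c) => // H.
- have := Pf_mono s H; lia.
- have := Pf_mono s H; lia.
Qed.

End Aux.

Section Aux2.

Lemma cnt_blk s c : (c < size s)%N ->
  (\sum_(i < sumn s) (cblk s i == c : nat))%N = nth 0 s c.
Proof.
move=> Hc.
rewrite -(big_mkord xpredT (fun i => nat_of_bool (cblk s i == c))).
have HN : (Pf s c.+1 <= sumn s)%N by rewrite -Pf_size; apply: Pf_mono.
have HS := Pf_S Hc.
rewrite (eq_big_nat _ _ (F2 := fun i => nat_of_bool (Pf s c <= i < Pf s c.+1)%N)); last first.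
  move=> i /andP[_ Hi]; have [H1 H2 H3] := cblk_spec Hi.
  case: (boolP (Pf s c <= i < Pf s c.+1)%N) => [/andP[Ha Hb]|Hn].
    by rewrite (cblk_eq Hc Ha Hb) eqxx.
  case: eqP => // E; rewrite -E in Hn; by rewrite H2 H3 in Hn.
rewrite (big_cat_nat _ (n:=Pf s c)) //=; last by lia.
rewrite (big_cat_nat _ (m:=Pf s c) (n:=Pf s c.+1)) //=; last by lia.
have H0 : forall m n (P : nat -> bool), (forall i, (m <= i < n)%N -> ~~ P i) ->
   (\sum_(m <= i < n) (P i : nat))%N = 0%N.
  move=> m n P HP; rewrite big_nat_cond big1 // => i; rewrite andbT => /HP.
  by move/negbTE => ->.
rewrite H0; last by move=> i /andP[_ H]; apply/negP => /andP[]; lia.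
rewrite [X in (_ + (_ + X))%N]H0; last by move=> i /andP[H _]; apply/negP => /andP[]; lia.
rewrite (eq_big_nat _ _ (F2 := fun _ => 1%N)); last by move=> i ->.
rewrite sum_nat_const_nat; lia.
Qed.

Local Open Scope ring_scope.

Lemma sum_blk s (F : nat -> algC) :
  \sum_(i < sumn s) F (cblk s i) = \sum_(c < size s) (nth 0 s c)%:R * F c.
Proof.
have E : forall i : 'I_(sumn s),
   F (cblk s i) = \sum_(c < size s) (cblk s i == c)%:R * F c.
  move=> i; have [H1 _ _] := cblk_spec (ltn_ord i).
  rewrite (bigD1 (Ordinal H1)) //= eqxx mul1r big1 ?addr0 // => c Hc.
  suff -> : (cblk s i == c) = false by rewrite mul0r.
  apply/negbTE; apply: contra Hc => /eqP H; apply/eqP/val_inj => /=; by rewrite H.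
rewrite (eq_bigr _ (fun i _ => E i)) exchange_big /=.
apply: eq_bigr => c _; rewrite -mulr_suml -cnt_blk // natr_sum.
by [].
Qed.

End Aux2.

Section Aux3.
Local Open Scope ring_scope.

Definition bad (b c : nat) : bool := if b == c then ~~ odd b else odd (maxn b c).

Lemma bad_sym b c : bad b c = bad c b.
Proof. rewrite /bad eq_sym maxnC; by case: eqP => // ->. Qed.

Lemma cadjE s u v : cadj s u v = (u != v) && bad (cblk s u) (cblk s v).
Proof. by []. Qed.

Lemma cadj_sym s u v : cadj s u v = cadj s v u.
Proof. by rewrite !cadjE eq_sym bad_sym. Qed.

Definition nu s b : algC := \sum_(c < size s) (nth 0%N s c)%:R * (bad b c)%:R.

Lemma deg_eq s (j : 'I_(sumn s)) :
  (#|[set x : 'I_(sumn s) | cadj s j x]|)%:R = nu s (cblk s j) - (~~ odd (cblk s j))%:R :> algC.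
Proof.
rewrite cardsE -sum1_card natr_sum big_mkcond /=.
have E1 := sum_blk s (fun c => (bad (cblk s j) c)%:R).
rewrite /nu -E1 (bigD1 j) //= [X in _ = X - _](bigD1 j) //=.
rewrite unfold_in /= eqxx /= /bad eqxx add0r addrAC subrr add0r.
apply: eq_bigr => i Hi; rewrite unfold_in /= eq_sym Hi /=; by case: ifP.
Qed.

Lemma LapE s (v : 'rV[algC]_(sumn s)) j :
  (v *m cgraph_lap s) 0 j =
  nu s (cblk s j) * v 0 j - \sum_(i < sumn s) (bad (cblk s j) (cblk s i))%:R * v 0 i.
Proof.
rewrite mxE (bigD1 j) //= !mxE eqxx deg_eq [in RHS](bigD1 j) //=.
have -> : \sum_(i < sumn s | i != j) v 0 i * cgraph_lap s i j =
          - \sum_(i < sumn s | i != j) (bad (cblk s j) (cblk s i))%:R * v 0 i.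
  rewrite -sumrN; apply: eq_bigr => i Hi; rewrite !mxE (negbTE Hi).
  by rewrite cadj_sym /cadj eq_sym Hi /= mulrN mulrC.
rewrite /bad eqxx; ring.
Qed.

End Aux3.

Section Aux4.
Local Open Scope ring_scope.

Definition Qf s (f : nat -> algC) b :=
  \sum_(c < size s) (nth 0%N s c)%:R * (bad b c)%:R * (f b - f c).

Lemma LapE_blk s (f : nat -> algC) (v : 'rV[algC]_(sumn s)) :
  (forall i, v 0 i = f (cblk s i)) -> forall j,
  (v *m cgraph_lap s) 0 j = Qf s f (cblk s j).
Proof.
move=> Hv j; rewrite LapE.
rewrite (eq_bigr (fun i : 'I_(sumn s) => (bad (cblk s j) (cblk s i))%:R * f (cblk s i))); last first.
  by move=> i _; rewrite Hv.
rewrite (sum_blk s (fun c => (bad (cblk s j) c)%:R * f c)) Hv /Qf /nu.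
rewrite mulr_suml -sumrB; apply: eq_bigr => c _; ring.
Qed.

Lemma blk_vertex s b : (b < size s)%N -> (0 < nth 0%N s b)%N ->
  (Pf s b < sumn s)%N /\ cblk s (Pf s b) = b.
Proof.
move=> Hb Hp; have HS := Pf_S Hb.
have HN : (Pf s b.+1 <= sumn s)%N by rewrite -Pf_size; apply: Pf_mono.
split; first lia.
apply: cblk_eq => //; lia.
Qed.

Lemma eig_quot s (f : nat -> algC) a b0 : (b0 < size s)%N -> (0 < nth 0%N s b0)%N ->
  f b0 != 0 -> (forall b, (b < size s)%N -> Qf s f b = a * f b) ->
  eigenvalue (cgraph_lap s) a.
Proof.
move=> Hb0 Hp Hf HQ; apply/eigenvalueP.
exists (\row_i f (cblk s i)).
  apply/rowP => j; rewrite (LapE_blk (f := f)); last by move=> i; rewrite mxE.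
  rewrite !mxE HQ //; by have [] := cblk_spec (ltn_ord j).
have [H1 H2] := blk_vertex Hb0 Hp.
apply/eqP => /rowP /(_ (Ordinal H1)); rewrite !mxE /= H2 => E.
by rewrite E eqxx in Hf.
Qed.

Lemma sum_pick N (F : 'I_N -> algC) p (Hp : (p < N)%N) :
  \sum_(i < N) F i * (val i == p)%:R = F (Ordinal Hp).
Proof.
rewrite (bigD1 (Ordinal Hp)) //= eqxx mulr1 big1 ?addr0 // => i Hi.
suff -> : (val i == p) = false by rewrite mulr0.
apply/negbTE; apply: contra Hi => /eqP H; apply/eqP/val_inj => /=; by rewrite H.
Qed.

Lemma eig_int s b : (b < size s)%N -> (2 <= nth 0%N s b)%N ->
  eigenvalue (cgraph_lap s) (nu s b).
Proof.
move=> Hb H2.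
have HS := Pf_S Hb.
have HN : (Pf s b.+1 <= sumn s)%N by rewrite -Pf_size; apply: Pf_mono.
set p := Pf s b.
have Hp : (p < sumn s)%N by rewrite /p; lia.
have Hq : (p.+1 < sumn s)%N by rewrite /p; lia.
have Bp : cblk s p = b by apply: cblk_eq => //; rewrite /p; lia.
have Bq : cblk s p.+1 = b by apply: cblk_eq => //; rewrite /p; lia.
apply/eigenvalueP.
exists (\row_(i < sumn s) ((val i == p)%:R - (val i == p.+1)%:R : algC)).
  apply/rowP => j; rewrite LapE !mxE.
  under eq_bigr do rewrite mxE mulrBr.
  rewrite sumrB (sum_pick (fun i => (bad (cblk s j) (cblk s i))%:R) Hp).
  rewrite (sum_pick (fun i => (bad (cblk s j) (cblk s i))%:R) Hq) /= Bp Bq subrr subr0.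
  case: (eqVneq (nat_of_ord j) p) => [E|E].
    by have -> : cblk s j = b by rewrite E Bp.
  case: (eqVneq (nat_of_ord j) p.+1) => [E'|E'].
    by have -> : cblk s j = b by rewrite E' Bq.
  by rewrite subrr !mulr0.
apply/eqP => /rowP /(_ (Ordinal Hp)); rewrite !mxE /= eqxx.
have -> : (p == p.+1) = false by lia.
by move/eqP; rewrite subr0 oner_eq0.
Qed.

End Aux4.

Section Aux5.
Local Open Scope ring_scope.

Lemma eig_rev s a : all (fun x => 0 < x)%N s -> eigenvalue (cgraph_lap s) a ->
  (exists2 b, (b < size s)%N & (2 <= nth 0%N s b)%N && (a == nu s b)) \/
  exists f : nat -> algC, (exists2 b0, (b0 < size s)%N & f b0 != 0) /\
     forall b, (b < size s)%N -> Qf s f b = a * f b.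
Proof.
move=> Hpos /eigenvalueP [v Hv Hnz].
have Hps : forall b, (b < size s)%N -> (0 < nth 0%N s b)%N.
  by move=> b Hb; apply: (allP Hpos); apply: mem_nth.
have Heq : forall j, a * v 0 j = nu s (cblk s j) * v 0 j -
    \sum_(i < sumn s) (bad (cblk s j) (cblk s i))%:R * v 0 i.
  by move=> j; rewrite -LapE Hv !mxE.
case: (boolP [exists b : 'I_(size s), (2 <= nth 0%N s b)%N && (a == nu s b)]).
  case/existsP => b Hb; left; exists (val b); [exact: ltn_ord b | exact: Hb].
move=> /existsPn Hn; right.
pose vn (i : nat) : algC := oapp (fun o => v 0 o) 0 (insub i).
pose f c := vn (Pf s c).
have Hvf : forall j, v 0 j = f (cblk s j).
  move=> j; have [H1 H2 H3] := cblk_spec (ltn_ord j).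
  have [Hp Bp] := blk_vertex H1 (Hps _ H1).
  have Hf : f (cblk s j) = v 0 (Ordinal Hp) by rewrite /f /vn insubT.
  rewrite Hf; have := Hn (Ordinal H1); rewrite negb_and /= => /orP [Hs|Ha].
    have HS := Pf_S H1.
    have Hps1 := Hps _ H1.
    congr (v 0 _); apply: val_inj => /=; lia.
  have E1 := Heq j; have E2 := Heq (Ordinal Hp); move: E2; rewrite /= Bp => E2.
  have : (nu s (cblk s j) - a) * (v 0 j - v 0 (Ordinal Hp)) = 0.
    by rewrite mulrBr !mulrBl E1 E2; ring.
  move/eqP; rewrite mulf_eq0 subr_eq0 eq_sym (negbTE Ha) /= subr_eq0 => /eqP //.
have [j0 Hj0] : exists j, v 0 j != 0.
  case: (boolP [exists j, v 0 j != 0]) => [/existsP//|/existsPn H].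
  case/negP: Hnz; apply/eqP/rowP => j; rewrite mxE; apply/eqP.
  by have := H j; rewrite negbK.
exists f; split.
  exists (cblk s j0); first by have [] := cblk_spec (ltn_ord j0).
  by rewrite -Hvf.
move=> b Hb; have [Hp Bp] := blk_vertex Hb (Hps _ Hb).
have := LapE_blk Hvf (Ordinal Hp); rewrite Hv !mxE /= Bp => <-.
by rewrite Hvf /= Bp.
Qed.

End Aux5.

Section Aux6.
Local Open Scope ring_scope.

Lemma bad_lt b c : (b < c)%N -> bad b c = odd c.
Proof. move=> H; rewrite /bad; have -> : (b == c) = false by lia. by rewrite (maxn_idPr (ltnW H)). Qed.
Lemma bad_gt b c : (c < b)%N -> bad b c = odd b.
Proof. by move=> H; rewrite bad_sym bad_lt. Qed.

Definition fm s m c : algC :=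
  if (c < m)%N then (nth 0%N s m)%:R else if c == m then - (Pf s m)%:R else 0.
Definition Om s m : nat := (\sum_(c < size s | (m < c)%N && odd c) nth 0%N s c)%N.
Definition lam s m : nat := (odd m * Pf s m.+1 + Om s m)%N.

Lemma sum_lt s m : \sum_(c < size s) (nth 0%N s c)%:R * (c < m)%:R = (Pf s m)%:R :> algC.
Proof.
rewrite Pf_sum natr_sum [RHS]big_mkcond /=; apply: eq_bigr => c _.
by case: ifP; rewrite ?mulr1 ?mulr0.
Qed.

Lemma sum_eq n (G : nat -> algC) m : (m < n)%N -> \sum_(c < n) G c * (nat_of_ord c == m)%:R = G m.
Proof.
move=> Hm; rewrite (bigD1 (Ordinal Hm)) //= eqxx mulr1 big1 ?addr0 // => c Hc.
suff -> : (nat_of_ord c == m) = false by rewrite mulr0.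
apply/negbTE; apply: contra Hc => /eqP H; apply/eqP/val_inj => /=; by rewrite H.
Qed.

Lemma sum_eqc n (K : algC) m : (m < n)%N -> \sum_(c < n) K * (nat_of_ord c == m)%:R = K.
Proof. by move=> Hm; have := sum_eq (fun _ => K) Hm. Qed.

Lemma sum_O s m : (Om s m)%:R = \sum_(c < size s) (nth 0%N s c)%:R * ((m < c)%N && odd c)%:R :> algC.
Proof.
rewrite /Om natr_sum [LHS]big_mkcond /=; apply: eq_bigr => c _.
by case: ifP; rewrite ?mulr1 ?mulr0.
Qed.

Lemma QL s m : (m < size s)%N -> forall b, (b < size s)%N ->
  Qf s (fm s m) b = (lam s m)%:R * fm s m b.
Proof.
move=> Hm b Hb; rewrite /Qf /lam natrD natrM sum_O (Pf_S Hm) natrD.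
case: (ltngtP m b) => Hmb.
-
  have Hfb : fm s m b = 0.
    rewrite /fm; have -> : (b < m)%N = false by lia.
    by have -> : (b == m) = false by lia.
  rewrite Hfb mulr0.
  rewrite (eq_bigr (fun c : 'I_(size s) => - (odd b)%:R *
      ((nth 0%N s c)%:R * (c < m)%:R * (nth 0%N s m)%:R - (Pf s m)%:R * ((nth 0%N s c)%:R * (nat_of_ord c == m)%:R)))); last first.
    move=> c _; rewrite /fm.
    case: (ltngtP c m) => Hc.
    + rewrite (bad_gt (ltn_trans Hc Hmb)) /=; ring.
    + rewrite /=; ring.
    + have Hcb : (c < b)%N by rewrite Hc.
      rewrite (bad_gt Hcb) /=; ring.
  rewrite -mulr_sumr sumrB -mulr_suml sum_lt -mulr_sumr (sum_eq (fun c => (nth 0%N s c)%:R)) //.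
  ring.
-
  have Hfb : fm s m b = (nth 0%N s m)%:R by rewrite /fm Hmb.
  rewrite Hfb.
  rewrite (eq_bigr (fun c : 'I_(size s) => (nth 0%N s m)%:R * (odd m)%:R * ((nth 0%N s m)%:R + (Pf s m)%:R)
      * (nat_of_ord c == m)%:R + (nth 0%N s m)%:R * ((nth 0%N s c)%:R * ((m < c)%N && odd c)%:R))); last first.
    move=> c _; rewrite /fm.
    case: (ltngtP c m) => Hc.
    + rewrite /=; ring.
    + rewrite (bad_lt (ltn_trans Hmb Hc)) /=; ring.
    + have Hcb : (b < c)%N by rewrite Hc.
      rewrite (bad_lt Hcb) Hc /=; ring.
  rewrite big_split /= sum_eqc // -mulr_sumr.
  ring.
-
  subst b.
  have Hfb : fm s m m = - (Pf s m)%:R by rewrite /fm ltnn eqxx.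
  rewrite Hfb.
  rewrite (eq_bigr (fun c : 'I_(size s) => - ((odd m)%:R * ((Pf s m)%:R + (nth 0%N s m)%:R)) * ((nth 0%N s c)%:R * (c < m)%:R)
      + - (Pf s m)%:R * ((nth 0%N s c)%:R * ((m < c)%N && odd c)%:R))); last first.
    move=> c _; rewrite /fm.
    case: (ltngtP c m) => Hc.
    + rewrite (bad_gt Hc) /=; ring.
    + rewrite (bad_lt Hc) /=; ring.
    + rewrite Hc /=; ring.
  rewrite big_split /= -!mulr_sumr sum_lt.
  ring.
Qed.

End Aux6.

Section Aux7.
Local Open Scope ring_scope.

Lemma natr_neq0 n : (0 < n)%N -> (n%:R : algC) != 0.
Proof. by move=> H; rewrite pnatr_eq0 -lt0n. Qed.

Lemma tri4 (a b c d : nat) (f0 f1 f2 f3 x : algC) :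
  (0 < a)%N -> (0 < b)%N -> (0 < c)%N -> (0 < d)%N ->
  let s0 := a%:R in let s1 := b%:R in let s2 := c%:R in let s3 := d%:R in
  s1 * (f0 - f1) + s3 * (f0 - f3) = x * f0 ->
  s0 * (f1 - f0) + s3 * (f1 - f3) = x * f1 ->
  s3 * (f2 - f3) = x * f2 ->
  s0 * (f3 - f0) + s1 * (f3 - f1) + s2 * (f3 - f2) = x * f3 ->
  ~~ [&& f0 == 0, f1 == 0, f2 == 0 & f3 == 0] ->
  [\/ x = 0, x = s0 + s1 + s3, x = s3 | x = s0 + s1 + s2 + s3].
Proof.
move=> Ha Hb Hc Hd s0 s1 s2 s3 Q0 Q1 Q2 Q3 Hnz.
have P2 : s0 + s1 != 0 by rewrite /s0 /s1 -natrD natr_neq0 //; lia.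
have P3 : s0 + s1 + s2 != 0 by rewrite /s0 /s1 /s2 -!natrD natr_neq0 //; lia.
have P4 : s0 + s1 + s2 + s3 != 0 by rewrite /s0 /s1 /s2 /s3 -!natrD natr_neq0 //; lia.
pose c1 := (f0 - f1) / (s0 + s1).
pose c2 := (f1 - f2 + c1 * s0) / (s0 + s1 + s2).
pose c3 := (f2 - f3 + c2 * (s0 + s1)) / (s0 + s1 + s2 + s3).
pose c0 := f3 + c3 * (s0 + s1 + s2).
have F0 : f0 = c0 + c1 * s1 + c2 * s2 + c3 * s3 by rewrite /c0 /c3 /c2 /c1; field; rewrite P2 P3 P4.
have F1 : f1 = c0 - c1 * s0 + c2 * s2 + c3 * s3 by rewrite /c0 /c3 /c2 /c1; field; rewrite P2 P3 P4.
have F2 : f2 = c0 - c2 * (s0 + s1) + c3 * s3 by rewrite /c0 /c3 /c2 /c1; field; rewrite P2 P3 P4.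
have F3 : f3 = c0 - c3 * (s0 + s1 + s2) by rewrite /c0 /c3 /c2 /c1; field; rewrite P2 P3 P4.
pose d0 := c0 * (0 - x).
pose d1 := c1 * (s0 + s1 + s3 - x).
pose d2 := c2 * (s3 - x).
pose d3 := c3 * (s0 + s1 + s2 + s3 - x).
have E0 : d0 + d1 * s1 + d2 * s2 + d3 * s3 = 0.
  rewrite -(subrr (x * f0)) -{1}Q0 F0 F1 F3 /d0 /d1 /d2 /d3; ring.
have E1 : d0 - d1 * s0 + d2 * s2 + d3 * s3 = 0.
  rewrite -(subrr (x * f1)) -{1}Q1 F0 F1 F3 /d0 /d1 /d2 /d3; ring.
have E2 : d0 - d2 * (s0 + s1) + d3 * s3 = 0.
  rewrite -(subrr (x * f2)) -{1}Q2 F2 F3 /d0 /d1 /d2 /d3; ring.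
have E3 : d0 - d3 * (s0 + s1 + s2) = 0.
  rewrite -(subrr (x * f3)) -{1}Q3 F0 F1 F2 F3 /d0 /d1 /d2 /d3; ring.
have D1 : d1 = 0.
  have : d1 * (s0 + s1) = 0 by rewrite -(subrr 0) -{1}E0 -E1; ring.
  by move/eqP; rewrite mulf_eq0 (negbTE P2) orbF => /eqP.
have D2 : d2 = 0.
  have : d2 * (s0 + s1 + s2) = 0 by rewrite -(subrr 0) -{1}E1 -E2 D1; ring.
  by move/eqP; rewrite mulf_eq0 (negbTE P3) orbF => /eqP.
have D3 : d3 = 0.
  have : d3 * (s0 + s1 + s2 + s3) = 0 by rewrite -(subrr 0) -{1}E2 -E3 D2; ring.
  by move/eqP; rewrite mulf_eq0 (negbTE P4) orbF => /eqP.
have D0 : d0 = 0 by rewrite -E3 D3; ring.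
move: D0 D1 D2 D3; rewrite /d0 /d1 /d2 /d3.
move=> /eqP; rewrite mulf_eq0 sub0r oppr_eq0 => /orP [/eqP C0|]; last by move/eqP ->; constructor 1.
move=> /eqP; rewrite mulf_eq0 subr_eq0 => /orP [/eqP C1|]; last by move/eqP ->; constructor 2.
move=> /eqP; rewrite mulf_eq0 subr_eq0 => /orP [/eqP C2|]; last by move/eqP ->; constructor 3.
move=> /eqP; rewrite mulf_eq0 subr_eq0 => /orP [/eqP C3|]; last by move/eqP ->; constructor 4.
case/negP: Hnz; rewrite F0 F1 F2 F3 C0 C1 C2 C3.
by rewrite !mul0r !subr0 !addr0 eqxx.
Qed.

Lemma tri2 (a b : nat) (f0 f1 x : algC) :
  (0 < a)%N -> (0 < b)%N ->
  let s0 := a%:R in let s1 := b%:R in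
  s1 * (f0 - f1) = x * f0 ->
  s0 * (f1 - f0) = x * f1 ->
  ~~ [&& f0 == 0 & f1 == 0] ->
  x = 0 \/ x = s0 + s1.
Proof.
move=> Ha Hb s0 s1 Q0 Q1 Hnz.
have P2 : s0 + s1 != 0 by rewrite /s0 /s1 -natrD natr_neq0 //; lia.
pose c1 := (f0 - f1) / (s0 + s1).
pose c0 := f1 + c1 * s0.
have F0 : f0 = c0 + c1 * s1 by rewrite /c0 /c1; field; rewrite P2.
have F1 : f1 = c0 - c1 * s0 by rewrite /c0 /c1; field; rewrite P2.
pose d0 := c0 * (0 - x).
pose d1 := c1 * (s0 + s1 - x).
have E0 : d0 + d1 * s1 = 0.
  rewrite -(subrr (x * f0)) -{1}Q0 F0 F1 /d0 /d1; ring.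
have E1 : d0 - d1 * s0 = 0.
  rewrite -(subrr (x * f1)) -{1}Q1 F0 F1 /d0 /d1; ring.
have D1 : d1 = 0.
  have : d1 * (s0 + s1) = 0 by rewrite -(subrr 0) -{1}E0 -E1; ring.
  by move/eqP; rewrite mulf_eq0 (negbTE P2) orbF => /eqP.
have D0 : d0 = 0 by rewrite -E1 D1; ring.
move: D0 D1; rewrite /d0 /d1.
move=> /eqP; rewrite mulf_eq0 sub0r oppr_eq0 => /orP [/eqP C0|]; last by move/eqP ->; left.
move=> /eqP; rewrite mulf_eq0 subr_eq0 => /orP [/eqP C1|]; last by move/eqP ->; right.
case/negP: Hnz; rewrite F0 F1 C0 C1.
by rewrite !mul0r !subr0 !addr0 eqxx.
Qed.

End Aux7.

Section Aux8.
Local Open Scope ring_scope.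

Lemma eig_zero s : (0 < size s)%N -> (0 < nth 0%N s 0)%N -> eigenvalue (cgraph_lap s) 0.
Proof.
move=> H1 H2; apply: (@eig_quot s (fun _ => 1) 0 0) => //; first by rewrite oner_eq0.
move=> b _; rewrite /Qf mul0r big1 // => c _; by rewrite subrr mulr0.
Qed.

Lemma eig_lam s m : all (fun x => 0 < x)%N s -> (0 < m)%N -> (m < size s)%N ->
  eigenvalue (cgraph_lap s) (lam s m)%:R.
Proof.
move=> Hpos Hm Hms.
have Hps : forall b, (b < size s)%N -> (0 < nth 0%N s b)%N.
  by move=> b Hb; apply: (allP Hpos); apply: mem_nth.
apply: (@eig_quot s (fm s m) _ 0); first lia.
- by apply: Hps; lia.
- by rewrite /fm Hm natr_neq0 // Hps.
- by move=> b Hb; apply: QL.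
Qed.

Lemma Om_S s m : (m.+1 < size s)%N ->
  Om s m = (odd m.+1 * nth 0%N s m.+1 + Om s m.+1)%N.
Proof.
move=> Hm; rewrite /Om big_mkcond [in RHS]big_mkcond /=.
rewrite (bigD1 (Ordinal Hm)) //= [in RHS](bigD1 (Ordinal Hm)) //= ltnSn ltnn /= add0n.
congr (_ + _)%N; first by case: (odd m); rewrite ?mul1n ?mul0n.
apply: eq_bigr => c Hc.
have Hc' : nat_of_ord c != m.+1.
  apply: contra Hc => /eqP H; apply/eqP/val_inj => /=; by rewrite H.
by have -> : (m < c)%N = (m.+1 < c)%N by lia.
Qed.

Lemma Pf0 s : Pf s 0 = 0%N.
Proof. by rewrite /Pf take0. Qed.

Definition P4 (a b c d n : nat) : Prop :=
  n = 0%N \/ n = (a + b + d)%N \/ n = d \/ n = (a + b + c + d)%N \/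
   ((2 <= b)%N /\ n = (a + d)%N) \/ ((2 <= c)%N /\ n = (c + d)%N) \/
   ((2 <= d)%N /\ n = (a + b + c)%N) \/ ((2 <= a)%N /\ n = (a + b + d)%N).

Lemma eig4 (a b c d : nat) (x : algC) :
  (0 < a)%N -> (0 < b)%N -> (0 < c)%N -> (0 < d)%N ->
  eigenvalue (cgraph_lap [:: a; b; c; d]) x <-> exists2 n, x = n%:R & P4 a b c d n.
Proof.
move=> Ha Hb Hc Hd.
have Hpos : all (fun x => 0 < x)%N [:: a; b; c; d] by rewrite /= Ha Hb Hc Hd.
split.
- case/(eig_rev Hpos) => [[b0 Hb0 /andP[H2 /eqP ->]]|[f [[b0 Hb0 Hf] Hq]]].
  + move: H2; rewrite /nu /=; rewrite !big_ord_recr big_ord0 /=.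
    case: b0 Hb0 => [|[|[|[|//]]]] _ /= H2.
    * exists (a + b + d)%N; last by do 7 right; split.
      by rewrite !natrD; ring.
    * exists (a + d)%N; last by do 4 right; left; split.
      by rewrite !natrD; ring.
    * exists (c + d)%N; last by do 5 right; left; split.
      by rewrite !natrD; ring.
    * exists (a + b + c)%N; last by do 6 right; left; split.
      by rewrite !natrD; ring.
  + have Q := fun b1 (H : (b1 < 4)%N) => Hq b1 H.
    have := Q 0%N erefl; have := Q 1%N erefl; have := Q 2%N erefl; have := Q 3%N erefl.
    move=> Q3 Q2 Q1 Q0; rewrite /Qf /= !big_ord_recr !big_ord0 /= in Q0 Q1 Q2 Q3.
    have := @tri4 a b c d (f 0%N) (f 1%N) (f 2%N) (f 3%N) x Ha Hb Hc Hd.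
    move=> /=; case.
    * by rewrite -Q0; ring.
    * by rewrite -Q1; ring.
    * by rewrite -Q2; ring.
    * by rewrite -Q3; ring.
    * case: b0 Hb0 Hf => [|[|[|[|//]]]] _ H; apply/negP => /and4P [E0 E1 E2 E3]; by rewrite ?E0 ?E1 ?E2 ?E3 in H.
    * by move=> ->; exists 0%N => //; left.
    * by move=> ->; exists (a + b + d)%N; [rewrite !natrD | right; left].
    * by move=> ->; exists d%N; [ | do 2 right; left].
    * by move=> ->; exists (a + b + c + d)%N; [rewrite !natrD | do 3 right; left].
- move=> [n -> HP].
  have L1 : lam [:: a; b; c; d] 1%N = (a + b + d)%N.
    rewrite /lam /Om /Pf big_mkcond /= !big_ord_recr big_ord0 /=; lia.
  have L2 : lam [:: a; b; c; d] 2%N = d.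
    rewrite /lam /Om /Pf big_mkcond /= !big_ord_recr big_ord0 /=; lia.
  have L3 : lam [:: a; b; c; d] 3%N = (a + b + c + d)%N.
    rewrite /lam /Om /Pf big_mkcond /= !big_ord_recr big_ord0 /=; lia.
  have NU : forall b0, (b0 < 4)%N -> (2 <= nth 0%N [:: a; b; c; d] b0)%N ->
      forall m, nu [:: a; b; c; d] b0 = m%:R -> eigenvalue (cgraph_lap [:: a; b; c; d]) m%:R.
    by move=> b0 Hb0 H2 m <-; apply: eig_int.
  case: HP => [->|[->|[->|[->|HP]]]].
  + by apply: eig_zero.
  + by rewrite -L1; apply: eig_lam.
  + by rewrite -[X in X%:R]L2; apply: eig_lam.
  + by rewrite -L3; apply: eig_lam.
  case: HP => [[H ->]|[[H ->]|[[H ->]|[H ->]]]].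
  + apply: (NU 1%N erefl H); rewrite /nu /= !big_ord_recr big_ord0 /= natrD; ring.
  + apply: (NU 2%N erefl H); rewrite /nu /= !big_ord_recr big_ord0 /= natrD; ring.
  + apply: (NU 3%N erefl H); rewrite /nu /= !big_ord_recr big_ord0 /= !natrD; ring.
  + apply: (NU 0%N erefl H); rewrite /nu /= !big_ord_recr big_ord0 /= !natrD; ring.
Qed.

Lemma eig2 (a b : nat) (x : algC) :
  (0 < a)%N -> (0 < b)%N ->
  eigenvalue (cgraph_lap [:: a; b]) x -> exists2 n, x = n%:R & n \in [:: 0; a + b; a]%N.
Proof.
move=> Ha Hb.
have Hpos : all (fun x => 0 < x)%N [:: a; b] by rewrite /= Ha Hb.
case/(eig_rev Hpos) => [[b0 Hb0 /andP[H2 /eqP ->]]|[f [[b0 Hb0 Hf] Hq]]].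
- move: H2; rewrite /nu /=; rewrite !big_ord_recr big_ord0 /=.
  case: b0 Hb0 => [|[|//]] _ /= H2.
  + exists (a + b)%N; last by rewrite !inE eqxx orbT.
    by rewrite !natrD; ring.
  + exists a; last by rewrite !inE eqxx !orbT.
    by ring.
- have := Hq 0%N erefl; have := Hq 1%N erefl.
  move=> Q1 Q0; rewrite /Qf /= !big_ord_recr !big_ord0 /= in Q0 Q1.
  have := @tri2 a b (f 0%N) (f 1%N) x Ha Hb.
  move=> /=; case.
  + by rewrite -Q0; ring.
  + by rewrite -Q1; ring.
  + by case: b0 Hb0 Hf => [|[|//]] _ /negbTE -> //=; rewrite andbF.
  + by move=> ->; exists 0%N; rewrite ?inE ?eqxx.
  + by move=> ->; exists (a + b)%N; [rewrite natrD | rewrite !inE eqxx orbT].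
Qed.

End Aux8.

Section Aux9.
Local Open Scope ring_scope.

Lemma natr_injC : injective (fun n : nat => (n%:R : algC)).
Proof. by move=> m n /eqP; rewrite eqr_nat => /eqP. Qed.

Lemma part1 (a b c d : nat) :
  (0 < a)%N -> (0 < b)%N -> (0 < c)%N -> (0 < d)%N ->
  num_distinct_eigenvalues_eq (cgraph_lap [:: a; b; c; d]) 4 <-> four_eig_family a b c d.
Proof.
move=> Ha Hb Hc Hd.
pose base := [:: 0; a + b + d; d; a + b + c + d]%N.
have Hbase : uniq base by rewrite /base /= !inE; lia.
have Hub : uniq (map (fun n : nat => (n%:R : algC)) base) by rewrite (map_inj_uniq natr_injC).
split.
- move=> [es [Hu Hs He]].
  have Hin : forall n, P4 a b c d n -> (n%:R : algC) \in es.
    by move=> n Hn; apply/He/eig4 => //; exists n.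
  have Hsub : {subset map (fun n : nat => (n%:R : algC)) base <= es}.
    move=> y /mapP [n Hn ->]; apply: Hin; move: Hn; rewrite /base !inE.
    by case/or4P => /eqP ->; rewrite /P4; tauto.
  have Hsz : (size es <= size (map (fun n : nat => (n%:R : algC)) base))%N by rewrite Hs size_map.
  have [_ Heq] := uniq_min_size Hub Hsub Hsz.
  have Hb' : forall n, P4 a b c d n -> n \in base.
    by move=> n /Hin; rewrite -Heq mem_map //; apply: natr_injC.
  have B1 : b = 1%N.
    case: (leqP 2 b) => H2; last lia.
    have : P4 a b c d (a + d)%N by do 4 right; left; split.
    move/Hb'; rewrite /base !inE; lia.
  have B2 : c = 1%N \/ c = (1 + a)%N.
    case: (leqP 2 c) => H2; last lia.
    have : P4 a b c d (c + d)%N by do 5 right; left; split.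
    move/Hb'; rewrite /base !inE; lia.
  have B3 : d = 1%N \/ d = (a + b + c)%N \/ d = c.
    case: (leqP 2 d) => H2; last lia.
    have : P4 a b c d (a + b + c)%N by do 6 right; left; split.
    move/Hb'; rewrite /base !inE; lia.
  rewrite /four_eig_family; lia.
- move=> Hfam.
  exists (map (fun n : nat => (n%:R : algC)) base); split => //.
  move=> x; rewrite eig4 //; split.
  + move=> [n -> Hn]; rewrite mem_map; last by apply: natr_injC.
    rewrite /base !inE; move: Hn Hfam; rewrite /P4 /four_eig_family; lia.
  + move=> /mapP [n Hn ->]; exists n => //; move: Hn; rewrite /base !inE.
    by case/or4P => /eqP ->; rewrite /P4; tauto.
Qed.

End Aux9.

Section Aux10.
Local Open Scope ring_scope.

Lemma not2 (a b : nat) : (0 < a)%N -> (0 < b)%N ->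
  ~ num_distinct_eigenvalues_eq (cgraph_lap [:: a; b]) 4.
Proof.
move=> Ha Hb [es [Hu Hs He]].
have Hsub : {subset es <= map (fun n : nat => (n%:R : algC)) [:: 0; a + b; a]%N}.
  move=> x /He /(eig2 Ha Hb) [n -> Hn]; by rewrite mem_map //; apply: natr_injC.
have := uniq_leq_size Hu Hsub; by rewrite Hs.
Qed.

Lemma not6 (s : seq nat) : (6 <= size s)%N -> all (fun x => 0 < x)%N s ->
  ~ num_distinct_eigenvalues_eq (cgraph_lap s) 4.
Proof.
case: s => [|a [|b [|c [|d [|e [|g t]]]]]] //= _ Hpos [es [Hu Hs He]].
set s := [:: a, b, c, d, e, g & t].
have Hps : all (fun x => 0 < x)%N s by [].
have Hg : (0 < g)%N by case/and5P: Hpos => _ _ _ _ /and3P [].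
have Hl : forall m, (0 < m)%N -> (m < 6)%N -> (lam s m)%:R \in es.
  move=> m H1 H2; apply/He. have := @eig_lam s m Hps H1. 
  move=> HH; apply: HH; rewrite /s /=; lia.
have O1 := @Om_S s 1 ltac:(rewrite /s /=; lia).
have O2 := @Om_S s 2 ltac:(rewrite /s /=; lia).
have O3 := @Om_S s 3 ltac:(rewrite /s /=; lia).
have O4 := @Om_S s 4 ltac:(rewrite /s /=; lia).
have Ha : (0 < a)%N by move: Hpos => /andP [].
have L1 : lam s 1 = (a + b + d + g + Om s 5)%N.
  rewrite /lam O1 O2 O3 O4 /s /Pf /=; lia.
have L2 : lam s 2 = (d + g + Om s 5)%N.
  rewrite /lam O2 O3 O4 /s /Pf /=; lia.
have L3 : lam s 3 = (a + b + c + d + g + Om s 5)%N.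
  rewrite /lam O3 O4 /s /Pf /=; lia.
have L4 : lam s 4 = (g + Om s 5)%N.
  rewrite /lam O4 /s /Pf /=; lia.
pose five := [:: 0; lam s 1; lam s 2; lam s 3; lam s 4]%N.
have Hu5 : uniq (map (fun n : nat => (n%:R : algC)) five).
  rewrite (map_inj_uniq natr_injC) /five L1 L2 L3 L4 /= !inE; lia.
have Hsub : {subset map (fun n : nat => (n%:R : algC)) five <= es}.
  move=> x /mapP [n Hn ->]; move: Hn; rewrite /five !inE => /orP [/eqP ->|].
    apply/He; rewrite mulr0n; have := @eig_zero s erefl Ha; exact.
  case/or4P => /eqP ->; apply: Hl; lia.
have := uniq_leq_size Hu5 Hsub; by rewrite Hs.
Qed.

End Aux10.

Theorem mainTheorem10 :
  (forall a1 a2 a3 a4 : nat,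
     (0 < a1)%N -> (0 < a2)%N -> (0 < a3)%N -> (0 < a4)%N ->
     (num_distinct_eigenvalues_eq (cgraph_lap [:: a1; a2; a3; a4]) 4
      <-> four_eig_family a1 a2 a3 a4)) /\
  (forall s : seq nat,
     ~~ odd (size s) -> (0 < size s)%N -> all (fun a => 0 < a)%N s ->
     (num_distinct_eigenvalues_eq (cgraph_lap s) 4
      <-> size s = 4%N /\
          four_eig_family (nth 0 s 0) (nth 0 s 1) (nth 0 s 2) (nth 0 s 3))).
Proof.
split; first exact: part1.
move=> s Hev Hsz Hpos.
case: s Hev Hsz Hpos => [|a [|b [|c [|d [|e [|g t]]]]]] //= Hev _ Hpos.
- move: Hpos => /and3P [Ha Hb _]; split; last by case.
  by move/(not2 Ha Hb).
- move: Hpos => /and5P [Ha Hb Hc Hd _]; rewrite part1 //; split => //; by case.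
- split; last by case.
  move=> HH; have Hs6 : (6 <= size [:: a, b, c, d, e, g & t])%N by rewrite /=; lia.
  exfalso; exact: (not6 Hs6 Hpos HH).
Qed.
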